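(* Let $n\geq 2$. In the double-edge digraph of the clustered graph of overlapping $n$-permutations, every directed cycle passes through exactly $n-1$ distinct clusters.
   Context: An $n$-permutation is a permutation $\pi_1\cdots\pi_n$ of $\{1,\ldots,n\}$. For a word $w$ of distinct numbers, $\mathrm{red}(w)$ is the permutation obtained by replacing the $i$-th smallest letter by $i$. For an $(n-1)$-permutation $\tau$, the cluster with signature $\tau$ is the set of all $n$-permutations $\pi$ with $\mathrm{red}(\pi_1\cdots\pi_{n-1})=\tau$. The clustered graph of overlapping $n$-permutations is the directed multigraph (loops allowed) whose vertices are the $(n-1)!$ clusters and in which every $n$-permutation $\pi$ contributes exactly one edge, going from the cluster containing $\pi$ to the cluster with signature $\mathrm{red}(\pi_2\cdots\pi_n)$. A double edge from $X$ to $Y$ is a pair of parallel edges from $X$ to $Y$. It is known that no pair of clusters is joined by three parallel edges, and that each cluster is the tail of exactly one double edge and the head of exactly one double edge. The double-edge digraph has the clusters as vertices and one arc $X\to Y$ for each double edge from $X$ to $Y$; by the preceding facts it is a disjoint union of directed cycles (a loop counting as a cycle through one cluster). *)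

(* Defs.v *)
From mathcomp Require Import all_boot.
From mathcomp Require Import fingroup perm.
Set Implicit Arguments. Unset Strict Implicit. Unset Printing Implicit Defensive.

(* red w : replace the i-th smallest letter by i (for words of distinct letters):
   the letter x becomes the number of letters of w that are <= x. *)
Definition red (w : seq nat) : seq nat :=
  [seq count (fun y => y <= x) w | x <- w].

Definition word (n : nat) (p : {perm 'I_n}) : seq nat :=
  [seq (p i).+1 | i <- enum 'I_n].

(* Cluster signatures: the (n-1)-permutations, as words over 1..n-1. *)
Definition is_cluster (n : nat) (X : seq nat) : bool :=
  perm_eq X (iota 1 n.-1).

(* Signature of the cluster containing pi: red(pi_1 ... pi_{n-1}). *)
Definition head_sig (n : nat) (p : {perm 'I_n}) : seq nat := red (take n.-1 (word p)).
(* Signature of the head cluster of the edge of pi: red(pi_2 ... pi_n). *)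
Definition tail_sig (n : nat) (p : {perm 'I_n}) : seq nat := red (behead (word p)).

Definition nedges (n : nat) (X Y : seq nat) : nat :=
  #|[pred p : {perm 'I_n} | (head_sig p == X) && (tail_sig p == Y)]|.

(* Arc relation of the double-edge digraph: a double edge from X to Y
   (no three parallel edges exist, so this is exactly two parallel edges). *)
Definition double_arc (n : nat) : rel (seq nat) :=
  fun X Y => [&& is_cluster n X, is_cluster n Y & nedges n X Y == 2].

(* Main.v *)
Require Import Defs.
From mathcomp Require Import all_boot.
From mathcomp Require Import fingroup perm.
From mathcomp Require Import zify.

Set Implicit Arguments. Unset Strict Implicit. Unset Printing Implicit Defensive.

Lemma count_lt (u : seq nat) x y : x \in u -> y < x ->
  count (fun z => z <= y) u < count (fun z => z <= x) u.
Proof.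
elim: u => [//|z u IH]; rewrite in_cons => /orP [/eqP <-|xu] yx /=.
  rewrite leqnn (leqNgt x y) yx /= add0n add1n ltnS.
  by apply: sub_count => w /= wy; apply: leq_trans wy (ltnW yx).
have := IH xu yx.
have : (z <= y) <= (z <= x) by case: (boolP (z <= y)) => h //=; rewrite (leq_trans h (ltnW yx)).
lia.
Qed.

Lemma le_count (u : seq nat) x y : x \in u ->
  (x <= y) = (count (fun z => z <= x) u <= count (fun z => z <= y) u).
Proof.
move=> xu; case: (leqP x y) => h.
  by apply/esym; apply: sub_count => w /= wx; apply: leq_trans wx h.
by apply/esym/negbTE; rewrite -ltnNge; apply: count_lt.
Qed.

Lemma nth_red u i : i < size u -> nth 0 (red u) i = count (fun z => z <= nth 0 u i) u.
Proof. by move=> hi; rewrite /red (nth_map 0). Qed.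

Lemma size_red u : size (red u) = size u.
Proof. by rewrite /red size_map. Qed.

Lemma le_red u i j : i < size u -> j < size u ->
  (nth 0 u i <= nth 0 u j) = (nth 0 (red u) i <= nth 0 (red u) j).
Proof.
move=> hi hj; rewrite !nth_red //; apply: le_count; exact: mem_nth.
Qed.

Lemma red_eq_le u v i j : red u = red v -> size u = size v ->
  i < size u -> j < size u ->
  (nth 0 u i <= nth 0 u j) = (nth 0 v i <= nth 0 v j).
Proof.
move=> e s hi hj; rewrite le_red // e -le_red // -s //.
Qed.

Lemma count_iota1 x n : count (fun y => y <= x) (iota 1 n) = minn x n.
Proof.
elim: n => [|n IH]; first by rewrite /=; lia.
rewrite -[n.+1]addn1 iotaD count_cat IH /=; lia.
Qed.

Lemma perm_red a n : perm_eq a (iota 1 n) -> red a = a.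
Proof.
move=> pa; rewrite /red -[in RHS](map_id a); apply/eq_in_map => x xa.
move/seq.permP: (pa) => ->; rewrite count_iota1.
have : x \in iota 1 n by rewrite -(perm_mem pa).
rewrite mem_iota; lia.
Qed.

Lemma count_idx (P : pred nat) s :
  count P s = count (fun j => P (nth 0 s j)) (iota 0 (size s)).
Proof. by rewrite -{1}(mkseq_nth 0 s) /mkseq count_map. Qed.

Lemma red_from_le a b : size a = size b ->
  (forall i j, i < size a -> j < size a -> (nth 0 a i <= nth 0 a j) = (nth 0 b i <= nth 0 b j)) ->
  red a = red b.
Proof.
move=> s H; apply: (eq_from_nth (x0 := 0)); first by rewrite !size_red.
move=> i; rewrite size_red => hi; rewrite !nth_red -?s //.
rewrite (count_idx _ a) (count_idx _ b) -s; apply: eq_in_count => j.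
rewrite mem_iota /= => hj; apply: H => //.
Qed.

Lemma count_rcons' (P : pred nat) s x : count P (rcons s x) = count P s + P x.
Proof. by rewrite -cats1 count_cat /= addn0. Qed.

Lemma red_rcons m x y :
  (forall z, z \in m -> (z <= x) = (z <= y) /\ (x <= z) = (y <= z)) ->
  red (rcons m x) = red (rcons m y).
Proof.
move=> H; rewrite /red !map_rcons !count_rcons' !leqnn.
have -> : count (fun z => z <= x) m = count (fun z => z <= y) m.
  by apply: eq_in_count => z /H [].
congr (rcons _ _); apply/eq_in_map => z /H [_ e] /=; by rewrite !count_rcons' e.
Qed.

Lemma red_rot w : red (rot 1 w) = rot 1 (red w).
Proof.
rewrite /red -map_rot; apply: eq_map => x.
by apply/seq.permP; rewrite perm_rot.
Qed.

Lemma final_step (a : seq nat) n : 2 <= n -> size a = n -> uniq a ->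
  (forall k, 0 < k < n.-1 ->
     ~ (nth 0 a 0 < nth 0 a k < nth 0 a n.-1) /\ ~ (nth 0 a n.-1 < nth 0 a k < nth 0 a 0)) ->
  red (behead a) = red (rot 1 (take n.-1 a)).
Proof.
case: a => [|a0 s]; first by move=> ? <-.
case/lastP: s => [|mid al]; first by move=> ? <-.
move=> hn sa ua H /=.
have sm : size mid = n - 2 by move: sa; rewrite /= size_rcons; lia.
have en : n.-1 = (size mid).+1 by lia.
rewrite en in H *.
rewrite /= -cats1 take_size_cat // rot1_cons cats1.
move: ua; rewrite /= mem_rcons in_cons rcons_uniq negb_or => /andP [/andP [a0al a0m]] /andP [alm um].
apply: red_rcons => z /(nthP 0) [k hk <-].
have := H k.+1; rewrite /= !nth_rcons hk /=.
have hz1 : nth 0 mid k != a0 by apply: contraNneq a0m => <-; exact: mem_nth.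
have hz2 : nth 0 mid k != al by apply: contraNneq alm => <-; exact: mem_nth.
move: a0al; rewrite eq_sym => a0al.
rewrite ltnn eqxx.
move=> /(_ hk) [h1 h2].
split; lia.
Qed.

Lemma swap_le (A B C D : nat) : A != B -> C != D -> (B <= A) = (D <= C) -> (A <= B) = (C <= D).
Proof. lia. Qed.

Lemma key (a b : seq nat) n : 2 <= n -> size a = n -> size b = n -> uniq a -> uniq b ->
  red a = a -> red b = b -> a != b ->
  red (take n.-1 a) = red (take n.-1 b) -> red (behead a) = red (behead b) ->
  red (behead a) = red (rot 1 (take n.-1 a)).
Proof.
move=> hn sa sb ua ub Ha Hb nab H1 H2.
have L1 : forall i j, i < n.-1 -> j < n.-1 -> (nth 0 a i <= nth 0 a j) = (nth 0 b i <= nth 0 b j).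
  move=> i j hi hj.
  have := @red_eq_le _ _ i j H1; rewrite !size_takel ?sa ?sb ?leq_pred // !nth_take //.
  by apply.
have L2 : forall i j, i < n.-1 -> j < n.-1 -> (nth 0 a i.+1 <= nth 0 a j.+1) = (nth 0 b i.+1 <= nth 0 b j.+1).
  move=> i j hi hj.
  have := @red_eq_le _ _ i j H2; rewrite !size_behead sa sb !nth_behead.
  by apply.
have da : nth 0 a 0 != nth 0 a n.-1 by rewrite nth_uniq ?sa //; lia.
have db : nth 0 b 0 != nth 0 b n.-1 by rewrite nth_uniq ?sb //; lia.
have Hd : (nth 0 a 0 <= nth 0 a n.-1) != (nth 0 b 0 <= nth 0 b n.-1).
  apply/negP => /eqP E; move/negP: nab; apply; apply/eqP.
  rewrite -Ha -Hb; apply: red_from_le; first by rewrite sa sb.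
  move=> i j; rewrite sa => hi hj.
  case: (ltnP i n.-1) => hi'; case: (ltnP j n.-1) => hj'.
  - exact: L1.
  - case: (posnP i) => [->|i0].
      by have -> : j = n.-1 by lia.
    have := L2 i.-1 j.-1; rewrite !prednK //; [apply; lia | lia].
  - case: (posnP j) => [->|j0].
      have -> : i = n.-1 by lia.
      by apply: swap_le; rewrite // eq_sym.
    have := L2 i.-1 j.-1; rewrite !prednK //; [apply; lia | lia].
  - have := L2 i.-1 j.-1; rewrite !prednK //; [apply; lia | lia | lia].
apply: final_step => // k hk.
have e1 := L1 0 k ltac:(lia) ltac:(lia).
have e1' := L1 k 0 ltac:(lia) ltac:(lia).
have e2 := L2 k.-1 n.-2 ltac:(lia) ltac:(lia).
have e2' := L2 n.-2 k.-1 ltac:(lia) ltac:(lia).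
rewrite !prednK in e2 e2'; try lia.
Qed.

Lemma size_word n (p : {perm 'I_n}) : size (word p) = n.
Proof. by rewrite /word size_map size_enum_ord. Qed.

Lemma uniq_word n (p : {perm 'I_n}) : uniq (word p).
Proof.
rewrite /word map_inj_uniq ?enum_uniq // => i j /eqP; rewrite eqSS => /eqP.
by move/val_inj/perm_inj.
Qed.

Lemma perm_word n (p : {perm 'I_n}) : perm_eq (word p) (iota 1 n).
Proof.
apply: uniq_perm; [exact: uniq_word | exact: iota_uniq |] => x.
rewrite mem_iota; apply/mapP/idP.
  by case=> i _ ->; have := ltn_ord (p i); lia.
move=> hx; have hk : x.-1 < n by lia.
exists ((p^-1)%g (Ordinal hk)); first by rewrite mem_enum.
by rewrite permKV /=; lia.
Qed.

Lemma word_inj n (p q : {perm 'I_n}) : word p = word q -> p = q.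
Proof.
move/eq_in_map => H; apply/permP => i; apply/val_inj.
by have /eqP := H i (mem_enum _ i); rewrite eqSS => /eqP.
Qed.

Lemma double_rot n X Y : 2 <= n -> double_arc n X Y -> Y = rot 1 X.
Proof.
move=> hn /and3P [_ _ /eqP e].
have : 1 < nedges n X Y by rewrite e.
rewrite /nedges; case/card_gt1P => p [q [hp hq npq]].
move: hp hq; rewrite !inE => /andP [/eqP hpX /eqP hpY] /andP [/eqP hqX /eqP hqY].
rewrite -hpX -hpY /head_sig /tail_sig -red_rot.
apply: (key (b := word q)) => //.
- exact: size_word.
- exact: size_word.
- exact: uniq_word.
- exact: uniq_word.
- exact: (perm_red (perm_word p)).
- exact: (perm_red (perm_word q)).
- by apply: contra npq => /eqP /word_inj ->.
- by rewrite /head_sig in hpX hqX; rewrite hpX hqX.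
- by rewrite /tail_sig in hpY hqY; rewrite hpY hqY.
Qed.

Lemma iter_rot (x : seq nat) j : j <= size x -> iter j (rot 1) x = rot j x.
Proof.
elim: j => [|j IH] hj; first by rewrite rot0.
have hj' : j < size x by [].
rewrite iterS (IH (ltnW hj')).
by rewrite (@rotS _ j x hj').
Qed.

Lemma rot_fix (x : seq nat) k : uniq x -> 0 < k < size x -> rot k x != x.
Proof.
move=> ux hk; apply/eqP => E.
have : nth 0 (rot k x) 0 = nth 0 x 0 by rewrite E.
rewrite /rot nth_cat size_drop subn_gt0 (_ : k < size x) ?nth_drop ?addn0; last by lia.
have h0 : 0 < size x by lia. have hk2 : k < size x by lia.
move=> /eqP; rewrite nth_uniq //; lia.
Qed.

Theorem lemma4 (n : nat) (hn : 2 <= n) (c : seq (seq nat)) :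
  c != [::] -> uniq c -> path.cycle (double_arc n) c -> size c = n.-1.
Proof.
case: c => [//|x c'] _ uc.
rewrite /= => hp.
have hx : is_cluster n x.
  by case: c' uc hp => [|y c''] _ /= /andP [/and3P [] ].
have ux : uniq x by rewrite (perm_uniq hx) iota_uniq.
have sx : size x = n.-1 by rewrite (perm_size hx) size_iota.
have : fpath (rot 1) x (rcons c' x).
  apply: sub_path hp => X Y /(double_rot hn) ->; exact: eqxx.
case/fpathP => k ek.
have sk : k = (size c').+1 by have := congr1 size ek; rewrite size_rcons size_traject.
have ec : x :: rcons c' x = traject (rot 1) x k.+1 by rewrite ek.
rewrite trajectSr -[x :: rcons c' x]/(rcons (x :: c') x) in ec.
have [e1 e2] : x :: c' = traject (rot 1) x k /\ x = iter k (rot 1) x.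
  by case: (rcons_inj ec) => e1 e2; split.
rewrite -sk.
case: (ltngtP k n.-1) => // h.
- exfalso; move/eqP: e2; apply/negP; rewrite eq_sym iter_rot ?sx; last by lia.
  by apply: rot_fix => //; rewrite sx; lia.
- exfalso; move: uc; rewrite e1 => uc.
  have := @nth_uniq _ x (traject (rot 1) x k) 0 n.-1; rewrite size_traject.
  move=> /(_ ltac:(lia) ltac:(lia) uc); rewrite !nth_traject; try lia.
  rewrite /= iter_rot ?sx // -sx rot_size eqxx; lia.
Qed.
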